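(* Let $L,M,N\in\mathbb N$, let $\vec B_1$ be a binary digit vector of length (scale factor) $N^L$ and $\vec B_2$ a binary digit vector of length $N^M$. If $\vec B_1\otimes\vec B_2=\vec B_2\otimes\vec B_1$, then $F_{\vec B_1}=F_{\vec B_2}$.
   Context: A binary digit vector of length (scale factor) $K\ge3$ is $\vec B=(b_0,\dots,b_{K-1})\in\{0,1\}^K$ with $2\le\|\vec B\|:=\sum_i b_i\le K-1$; its digit set is $D=\{i:b_i=1\}$. With $\phi_d(x)=(x+d)/K$ for $d\in D$, let $\mu_{\vec B}$ be the unique Borel probability measure with $\mu_{\vec B}=\frac{1}{\|\vec B\|}\sum_{d\in D}\mu_{\vec B}\circ\phi_d^{-1}$, supported on the attractor $C_{\vec B}\subset[0,1]$; the CDF is $F_{\vec B}(x)=\mu_{\vec B}([0,x])$. For binary vectors $\vec B=(b_0,\dots,b_{P-1})$ and $\vec C=(c_0,\dots,c_{Q-1})$, the Kronecker product $\vec B\otimes\vec C$ is the vector of length $PQ$ with $(\vec B\otimes\vec C)(n+mQ)=b_mc_n$ for $0\le n\le Q-1$, $0\le m\le P-1$. *)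

(* Defs.v *)
From HB Require Import structures.
From mathcomp Require Import all_boot all_order all_algebra.
From mathcomp Require Import all_classical all_reals all_analysis.
Set Implicit Arguments. Unset Strict Implicit. Unset Printing Implicit Defensive.
Import Order.TTheory GRing.Theory Num.Theory.
Local Open Scope classical_set_scope.
Local Open Scope ring_scope.

(* A binary digit vector of length (scale factor) K, represented as a
   sequence b_0, ..., b_{K-1} of booleans (true = digit 1). *)
Definition binary_digit_vector (K : nat) (B : seq bool) : Prop :=
  [/\ (3 <= K)%N, size B = K & (2 <= count id B <= K.-1)%N].

Definition bnorm (B : seq bool) : nat := count id B.

(* Kronecker product: (B (x) C)(n + m*Q) = b_m c_n. *)
Definition kron (B C : seq bool) : seq bool :=
  flatten [seq [seq b && c | c <- C] | b <- B].

Definition phi_map (R : realType) (K d : nat) (x : R) : R := (x + d%:R) / K%:R.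

Definition self_similar (R : realType) (B : seq bool) (mu : probability R R) : Prop :=
  forall A : set R, measurable A ->
    (mu A = ((bnorm B)%:R^-1)%:E *
           \sum_(d < size B | nth false B d) mu (@phi_map R (size B) d @^-1` A))%E.

Definition cdf_of (R : realType) (mu : probability R R) (x : R) : \bar R :=
  mu `[0, x]%classic.

(* Main.v *)
Require Import Defs.
From HB Require Import structures.
From mathcomp Require Import all_boot all_order all_algebra.
From mathcomp Require Import all_classical all_reals all_analysis.
Import Order.TTheory GRing.Theory Num.Theory.
Local Open Scope classical_set_scope.
Local Open Scope ring_scope.

From mathcomp Require Import ring lra.
Lemma kron_cons b B C : kron (b :: B) C = [seq b && c | c <- C] ++ kron B C.
Proof. by []. Qed.

Lemma kron_cat A B C : kron (A ++ B) C = kron A C ++ kron B C.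
Proof. by rewrite /kron map_cat flatten_cat. Qed.

Lemma size_kron B C : size (kron B C) = (size B * size C)%N.
Proof. elim: B => [//|b B IH]; by rewrite kron_cons size_cat size_map IH mulSn. Qed.

Lemma count_kron B C : count id (kron B C) = (count id B * count id C)%N.
Proof.
elim: B => [//|b B IH]; rewrite kron_cons count_cat IH count_map /=.
case: b => /=; last by rewrite (eq_count (a2 := pred0)) ?count_pred0.
by rewrite (eq_count (a2 := id)) // mul1n.
Qed.

Lemma nth_kron B C m n : (n < size C)%N ->
  nth false (kron B C) (m * size C + n) = nth false B m && nth false C n.
Proof.
move=> nC; elim: B m => [|b B IH] m; first by rewrite /kron /= !nth_nil.
rewrite kron_cons nth_cat size_map; case: m => [|m].
  by rewrite mul0n add0n nC (nth_map false).
rewrite mulSn -addnA ltnNge leq_addr /= addKn IH //.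
Qed.

Lemma kron1l C : kron [:: true] C = C.
Proof. by rewrite kron_cons cats0 map_id. Qed.

Lemma kron1r C : kron C [:: true] = C.
Proof. by elim: C => [//|c C IH]; rewrite kron_cons IH /= andbT. Qed.

Lemma kron_mapl a B C : kron (map (andb a) B) C = map (andb a) (kron B C).
Proof.
elim: B => [//|b B IH]; rewrite /= kron_cons IH kron_cons map_cat -map_comp.
by congr (_ ++ _); apply: eq_map => c /=; rewrite andbA.
Qed.

Lemma kronA A B C : kron (kron A B) C = kron A (kron B C).
Proof.
elim: A => [//|a A IH]; by rewrite !kron_cons kron_cat IH kron_mapl.
Qed.

Fixpoint kpow (B : seq bool) (k : nat) : seq bool :=
  if k is k'.+1 then kron B (kpow B k') else [:: true].

Lemma size_kpow B k : size (kpow B k) = (size B ^ k)%N.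
Proof. by elim: k => [//|k IH]; rewrite /= size_kron IH expnS. Qed.

Lemma count_kpow B k : count id (kpow B k) = (count id B ^ k)%N.
Proof. by elim: k => [//|k IH]; rewrite /= count_kron IH expnS. Qed.

Lemma kron_comm_pow A B k : kron A B = kron B A ->
  kron A (kpow B k) = kron (kpow B k) A.
Proof.
move=> H; elim: k => [|k IH] /=; first by rewrite kron1l kron1r.
by rewrite -kronA H kronA IH kronA.
Qed.

Lemma kron_comm_eq X Y : size X = size Y -> (0 < count id X)%N ->
  (0 < count id Y)%N -> kron X Y = kron Y X -> X = Y.
Proof.
move=> sXY cX cY H.
have E m n : (n < size X)%N -> nth false X m && nth false Y n = nth false Y m && nth false X n.
  move=> nX.
  rewrite -(nth_kron X Y m); last by rewrite -sXY.
  by rewrite H -sXY nth_kron.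
apply: (@eq_from_nth _ false) => // i iX.
move: cX cY; rewrite -!has_count => /(has_nthP false) [j jX Xj] /(has_nthP false) [k kY Yk].
apply/idP/idP => h.
  have := E i k; rewrite -sXY in kY; move=> /(_ kY); rewrite h Yk /=.
  by move=> /esym /andP [].
by have := E i j jX; rewrite h Xj /= => /andP [].
Qed.


Section Real.
Variable R : realType.

Definition Feq (B : seq bool) (F : R -> R) := forall x : R,
  F x = (bnorm B)%:R^-1 *
    \sum_(0 <= d < size B | nth false B d) F ((size B)%:R * x - d%:R).

Definition Fbd (F : R -> R) :=
  [/\ forall x, 0 <= F x <= 1, forall x, x < 0 -> F x = 0
    & forall x, 1 <= x -> F x = 1].

Lemma sum_const_B (B : seq bool) (x : R) :
  \sum_(0 <= d < size B | nth false B d) x = x *+ bnorm B.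
Proof.
rewrite big_const_seq iter_addr_0; congr (_ *+ _).
rewrite /bnorm; transitivity (count id (mkseq (nth false B) (size B))).
  by rewrite /mkseq count_map /index_iota subn0.
by rewrite mkseq_nth.
Qed.

Lemma sum_nat_mul (P Q : nat) (h : nat -> R) :
  \sum_(0 <= j < P * Q) h j = \sum_(0 <= m < P) \sum_(0 <= n < Q) h (m * Q + n)%N.
Proof.
elim: P => [|P IH]; first by rewrite mul0n !big_geq.
rewrite mulSnr (big_cat_nat _ (leq_addr _ _)) //= IH big_nat_recr //=.
congr (_ + _).
have sh a b (g : nat -> R) : \sum_(a <= i < a + b) g i = \sum_(0 <= n < b) g (a + n)%N.
  by rewrite -{1}(add0n a) big_addn addKn; apply: eq_bigr => n _; rewrite addnC.
by rewrite sh; apply: eq_bigr => n _.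
Qed.

Lemma sum_atmost1 (r : seq nat) (P : pred nat) (h : nat -> R) (e : R) :
  uniq r -> (forall i j, h i != 0 -> h j != 0 -> i = j) ->
  (forall i, `|h i| <= e) -> 0 <= e ->
  `|\sum_(i <- r | P i) h i| <= e.
Proof.
move=> + H he e0; elim: r => [|a r IH]; first by rewrite big_nil normr0.
rewrite /= => /andP [ar ur]; rewrite big_cons.
case: (boolP (P a && (h a != 0))) => [/andP [-> ha]|].
  rewrite big1_seq ?addr0 // => j /andP [_ jr].
  apply/eqP; apply: contraNT ar => hj.
  by rewrite (H _ _ ha hj).
case Pa: (P a) => /=; last by move=> _; rewrite IH.
by rewrite negbK => /eqP ->; rewrite add0r IH.
Qed.

Lemma Feq_kron B C F : Feq B F -> Feq C F -> Feq (kron B C) F.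
Proof.
move=> HB HC x; rewrite HB /bnorm count_kron natrM invfM size_kron.
rewrite [in LHS]big_mkcond [in RHS]big_mkcond /= sum_nat_mul -mulrA; congr (_ * _).
rewrite [in RHS]mulr_sumr; apply: eq_bigr => m _.
case Bm: (nth false B m) => /=; last first.
  rewrite big1_seq ?mulr0 // => n /andP [_]; rewrite mem_index_iota => /andP [_ nC].
  by rewrite nth_kron // Bm.
rewrite [in LHS]HC /bnorm; congr (_ * _); rewrite big_mkcond /=.
apply: eq_big_nat => n /andP [_ nC].
rewrite nth_kron // Bm andTb; case: ifP => // _.
congr F; rewrite !natrD !natrM; ring.
Qed.

Lemma Feq_one F : Feq [:: true] F.
Proof.
move=> x; rewrite /Feq /bnorm /= big_mkcond big_nat1 /=.
by rewrite invr1 !mul1r subr0.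
Qed.

Lemma Feq_kpow B F k : Feq B F -> Feq (kpow B k) F.
Proof.
move=> HB; elim: k => [|k IH] /=; [exact: Feq_one | exact: Feq_kron].
Qed.

Lemma Funiq B F1 F2 : (2 <= bnorm B)%N -> Fbd F1 -> Fbd F2 ->
  Feq B F1 -> Feq B F2 -> F1 =1 F2.
Proof.
move=> c2 [b1 l1 u1] [b2 l2 u2] E1 E2.
set c : R := (bnorm B)%:R.
have c1 : 1 < c by rewrite (ltr_nat R 1).
have c0 : 0 < c by lra.
have key n x : `|F1 x - F2 x| <= (c ^+ n)^-1.
  elim: n x => [|n IH] x.
    rewrite expr0 invr1 ler_norml; move: (b1 x) (b2 x) => /andP[? ?] /andP[? ?].
    apply/andP; split; lra.
  rewrite E1 E2 -/c -mulrBr -sumrB normrM exprS invfM ger0_norm; last first.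
    by rewrite invr_ge0; lra.
  rewrite ler_pM2l ?invr_gt0 //.
  apply: sum_atmost1 => //; first by rewrite iota_uniq.
    move=> i j.
    have nz y : F1 y - F2 y != 0 -> 0 <= y < 1.
      move=> h; apply/andP; split.
        rewrite leNgt; apply/negP => hy; move: h.
        by rewrite l1 // l2 // subrr eqxx.
      rewrite ltNge; apply/negP => hy; move: h.
      by rewrite u1 // u2 // subrr eqxx.
    move=> /nz /andP [hi1 hi2] /nz /andP [hj1 hj2].
    apply/eqP; rewrite eqn_leq; apply/andP; split.
      rewrite -ltnS -(ltr_nat R) -addn1 natrD; lra.
    rewrite -ltnS -(ltr_nat R) -addn1 natrD; lra.
  by rewrite invr_ge0 exprn_ge0 //; lra.
move=> x; apply/eqP; rewrite -subr_eq0 -normr_eq0; apply/negPn/negP => hx.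
have gx : 0 < `|F1 x - F2 x| by rewrite lt_def hx normr_ge0.
set y := `|F1 x - F2 x|^-1.
have y0 : 0 <= y by rewrite invr_ge0 ltW.
have := archi_boundP y0; set n := Num.bound y => yn.
have := key n x.
have cn : (n%:R : R) < c ^+ n by rewrite -natrX ltr_nat ltn_expl.
have ycn : y < c ^+ n by lra.
have : (c ^+ n)^-1 < y^-1.
  rewrite ltf_pV2 // posrE ?exprn_gt0 //.
  by rewrite /y invr_gt0.
rewrite /y invrK; lra.
Qed.
End Real.


Section Meas.
Variables (R : realType) (B : seq bool) (mu : probability R R).
Hypothesis (K0 : (0 < size B)%N) (c2 : (2 <= bnorm B)%N) (HS : self_similar B mu).

Local Notation m A := (fine (mu A)).
Local Notation K := (size B).

Lemma mE A : measurable A -> mu A = (m A)%:E.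
Proof. by move=> mA; rewrite fineK // fin_num_measure. Qed.

Lemma m_ge0 A : measurable A -> 0 <= m A.
Proof. by move=> mA; rewrite fine_ge0 // measure_ge0. Qed.

Lemma m_le1 A : measurable A -> m A <= 1.
Proof. by move=> mA; have := probability_le1 mu mA; rewrite mE // lee_fin. Qed.

Lemma m_le A A' : measurable A -> measurable A' -> A `<=` A' -> m A <= m A'.
Proof.
move=> mA mA' AA'; rewrite -lee_fin -(mE _ mA) -(mE _ mA').
by apply: le_measure => //; rewrite inE.
Qed.

Lemma SSm A : measurable A ->
  (forall d, (d < K)%N -> measurable (@phi_map R K d @^-1` A)) ->
  m A = (bnorm B)%:R^-1 * \sum_(0 <= d < K | nth false B d) m (@phi_map R K d @^-1` A).
Proof.
move=> mA mpre; have := HS _ mA.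
rewrite (eq_bigr (fun d : 'I_K => (m (@phi_map R K d @^-1` A))%:E)); last first.
  by move=> d _; rewrite -mE //; apply: mpre.
rewrite sumEFin -EFinM mE // => -[->]; by rewrite big_mkord.
Qed.

Let kpos : 0 < (K%:R : R).
Proof. by rewrite ltr0n. Qed.

Lemma pre_left t d : @phi_map R K d @^-1` `]-oo, - t[%classic = `]-oo, - (K%:R * t + d%:R)[%classic.
Proof.
apply/seteqP; split => y; rewrite /= !in_itv /= /phi_map ltr_pdivrMr //; lra.
Qed.

Lemma pre_right t d : @phi_map R K d @^-1` `]1 + t, +oo[%classic =
  `]1 + (K%:R * (1 + t) - d%:R - 1), +oo[%classic.
Proof.
apply/seteqP; split => y; rewrite /= !in_itv /= /phi_map ?andbT ltr_pdivlMr //; lra.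
Qed.

Lemma pre_cc x d : @phi_map R K d @^-1` `[0, x]%classic = `[- d%:R, K%:R * x - d%:R]%classic.
Proof.
apply/seteqP; split => y; rewrite /= !in_itv /= /phi_map ler_pdivlMr // ler_pdivrMr //; lra.
Qed.


Lemma tail_step (s : R -> R) (g : R -> nat -> R) (d0 : nat) :
  (forall u v, 0 <= u -> u <= v -> s v <= s u) ->
  (forall t, 0 <= t -> s t = (bnorm B)%:R^-1 *
        \sum_(0 <= d < K | nth false B d) s (g t d)) ->
  (forall t d, 0 <= t -> (d < K)%N -> t <= g t d) ->
  (forall t d, 0 <= t -> (d < K)%N -> d != d0 -> t + 1 <= g t d) ->
  forall n : nat, s 0 <= s n%:R.
Proof.
move=> mono eq g1 g2.
set c : R := (bnorm B)%:R.
have c1 : 1 < c by rewrite (ltr_nat R 1).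
have step t : 0 <= t -> s t <= s (t + 1).
  move=> t0; set a := s t; set b := s (t + 1).
  have ba : b <= a by apply: mono => //; lra.
  pose h d := if d == d0 then a - b else 0.
  have S1 : \sum_(0 <= d < K | nth false B d) s (g t d) <=
            \sum_(0 <= d < K | nth false B d) (b + h d).
    rewrite big_seq_cond [leRHS]big_seq_cond; apply: ler_sum => d /andP [dK _].
    rewrite mem_index_iota in dK; move/andP: dK => [_ dK].
    rewrite /h; case: eqP => [_|/eqP dd0].
      by have := mono t (g t d) t0 (g1 t d t0 dK); rewrite /a; lra.
    by rewrite addr0; apply: mono => //; [lra | exact: g2].
  have S2 : \sum_(0 <= d < K | nth false B d) h d <= a - b.
    apply: le_trans (ler_norm _) _; apply: sum_atmost1 => //.
    - exact: iota_uniq.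
    - move=> i j; rewrite /h; case: (i =P d0) => [->|]; last by rewrite eqxx.
      by case: (j =P d0) => [->//|]; rewrite eqxx.
    - by move=> i; rewrite /h; case: eqP => _; rewrite ?normr0 ?ger0_norm //; lra.
    - lra.
  move: S1; rewrite big_split /= sum_const_B -/c => S1.
  have E := eq t t0; rewrite -/a -/c in E.
  have cpos : 0 < c by lra.
  have Sa : \sum_(0 <= d < K | nth false B d) s (g t d) = a * c.
    by rewrite E mulrAC mulVf ?mul1r // gt_eqF.
  rewrite Sa in S1.
  have : b *+ bnorm B = b * c by rewrite mulr_natr.
  nra.
elim=> [|n IH]; first by [].
apply: le_trans IH _; rewrite -addn1 natrD; apply: step; exact: ler0n.
Qed.


Lemma const_lim_null (F : (set R)^nat) :
  (forall n, measurable (F n)) -> \bigcap_n F n = set0 ->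
  (forall n k, (n <= k)%N -> F k `<=` F n) ->
  (forall n, mu (F n) = mu (F 0%N)) -> mu (F 0%N) = 0%E.
Proof.
move=> mF cap mono cst.
have e : mu \o F = fun _ => mu (F 0%N) by apply: funext => n /=; rewrite cst.
have H : (fun _ : nat => mu (F 0%N)) @ \oo --> (0 : \bar R).
  rewrite -e -(measure0 mu) -cap; apply: nonincreasing_cvg_mu => //.
  - exact: (le_lt_trans (probability_le1 mu (mF 0%N))) (ltry _).
  - by rewrite cap; exact: measurable0.
  - by move=> n k nk; apply/subsetPset; exact: mono.
have := cvg_lim (@ereal_hausdorff R) H.
rewrite lim_cst; [by apply; exact: _ | exact: ereal_hausdorff].
Qed.

Let K1 : (1 : R) <= K%:R.
Proof. by rewrite (ler_nat R 1). Qed.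

Lemma left_null : mu `]-oo, 0[%classic = 0%E.
Proof.
pose s t := m `]-oo, - t[%classic.
have mono u v : 0 <= u -> u <= v -> s v <= s u.
  move=> u0 uv; apply: m_le; try exact: measurable_itv.
  by move=> y; rewrite /= !in_itv /=; lra.
have eqs t : 0 <= t -> s t = (bnorm B)%:R^-1 *
    \sum_(0 <= d < K | nth false B d) s (K%:R * t + d%:R).
  move=> t0; rewrite /s SSm; last 2 first.
  - exact: measurable_itv.
  - by move=> d _; rewrite pre_left; exact: measurable_itv.
  by congr (_ * _); apply: eq_bigr => d _; rewrite pre_left.
have H := @tail_step s _ 0%N mono eqs.
have Hn : forall n : nat, s 0 <= s n%:R.
  apply: H.
  - move=> t d t0 dK; have := ler0n R d; have := K1 => k1.
    have : 0 <= (K%:R - 1) * t by apply: mulr_ge0 => //; lra.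
    lra.
  - move=> t d t0 dK d0; have : (1 : R) <= d%:R by rewrite (ler_nat R 1) lt0n.
    have := K1 => k1; have : 0 <= (K%:R - 1) * t by apply: mulr_ge0 => //; lra.
    lra.
pose F n := `]-oo, - (n%:R : R)[%classic.
have := @const_lim_null F.
rewrite /F oppr0; apply.
- by move=> n; exact: measurable_itv.
- apply/seteqP; split => // y /= Hy.
  have := archi_boundP (normr_ge0 y); set n := Num.bound _ => yn.
  have := Hy n I; rewrite /= in_itv /=.
  have := ler_norm (- y); rewrite normrN; lra.
- move=> n k nk y; rewrite /= !in_itv /=.
  have : (n%:R : R) <= k%:R by rewrite ler_nat.
  lra.
- move=> n; rewrite [LHS]mE; last exact: measurable_itv.
  rewrite [RHS]mE; last exact: measurable_itv.
  congr (_%:E); transitivity (s n%:R) => //.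
  transitivity (s 0); last by rewrite /s oppr0.
  apply/le_anti/andP; split; last exact: Hn.
  by apply: mono => //; exact: ler0n.
Qed.

Lemma right_null : mu `]1, +oo[%classic = 0%E.
Proof.
pose s t := m `]1 + t, +oo[%classic.
have mono u v : 0 <= u -> u <= v -> s v <= s u.
  move=> u0 uv; apply: m_le; try exact: measurable_itv.
  by move=> y; rewrite /= !in_itv /= ?andbT; lra.
have eqs t : 0 <= t -> s t = (bnorm B)%:R^-1 *
    \sum_(0 <= d < K | nth false B d) s (K%:R * (1 + t) - d%:R - 1).
  move=> t0; rewrite /s SSm; last 2 first.
  - exact: measurable_itv.
  - by move=> d _; rewrite pre_right; exact: measurable_itv.
  by congr (_ * _); apply: eq_bigr => d _; rewrite pre_right.
have H := @tail_step s _ K.-1 mono eqs.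
have Hn : forall n : nat, s 0 <= s n%:R.
  apply: H.
  - move=> t d t0 dK; have : (d.+1%:R : R) <= K%:R by rewrite ler_nat.
    rewrite -addn1 natrD => hd; have := K1 => k1.
    have : 0 <= (K%:R - 1) * t by apply: mulr_ge0 => //; lra.
    lra.
  - move=> t d t0 dK d0.
    have : (d.+2%:R : R) <= K%:R.
      rewrite ler_nat; move: dK d0; case: (size B) => // k; rewrite ltnS /= => dk dk'.
      by rewrite ltnS ltn_neqAle dk' dk.
    rewrite -addn2 natrD => hd; have := K1 => k1.
    have : 0 <= (K%:R - 1) * t by apply: mulr_ge0 => //; lra.
    lra.
pose F n := `]1 + (n%:R : R), +oo[%classic.
have := @const_lim_null F.
rewrite /F addr0; apply.
- by move=> n; exact: measurable_itv.
- apply/seteqP; split => // y /= Hy.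
  have := archi_boundP (normr_ge0 y); set n := Num.bound _ => yn.
  have := Hy n I; rewrite /= in_itv /= andbT.
  have := ler_norm y; lra.
- move=> n k nk y; rewrite /= !in_itv /= !andbT.
  have : (n%:R : R) <= k%:R by rewrite ler_nat.
  lra.
- move=> n; rewrite [LHS]mE; last exact: measurable_itv.
  rewrite [RHS]mE; last exact: measurable_itv.
  congr (_%:E); transitivity (s n%:R) => //.
  transitivity (s 0); last by rewrite /s addr0.
  apply/le_anti/andP; split; last exact: Hn.
  by apply: mono => //; exact: ler0n.
Qed.

Lemma restrict A : measurable A -> mu A = mu (A `&` `[0, 1]%classic).
Proof.
move=> mA; have E := measureDI mu mA (measurable_itv `[0, 1]); rewrite /= in E.
suff S0 : mu (A `\` `[0, 1]%classic) = 0%E by rewrite E S0 add0e.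
apply/le_anti/andP; split; last exact: measure_ge0.
have sub : A `\` `[0, 1]%classic `<=` `]-oo, 0[%classic `|` `]1, +oo[%classic.
  move=> y [_] /=; rewrite !in_itv /= => h.
  have [y0|y0] := ltP y 0; [by left | right].
  rewrite andbT ltNge; apply/negP => y1; apply: h; by rewrite y0 y1.
have E2 := measureU2 mu (measurable_itv `]-oo, 0[) (measurable_itv `]1, +oo[).
rewrite /= left_null right_null adde0 in E2.
apply: le_trans E2; apply: le_measure; last exact: sub.
- by rewrite inE; apply: measurableD => //; exact: measurable_itv.
- by rewrite inE; apply: measurableU; exact: measurable_itv.
Qed.

Lemma Fmu_bd : Fbd R (fun x => m `[0, x]%classic).
Proof.
split.
- by move=> x; rewrite m_ge0 ?m_le1 //; exact: measurable_itv.
- move=> x x0; rewrite (_ : `[0, x]%classic = set0) ?measure0 //.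
  by apply/seteqP; split => // y /=; rewrite in_itv /= => /andP [] ; lra.
- move=> x x1; rewrite restrict; last exact: measurable_itv.
  rewrite (_ : `[0, x]%classic `&` `[0, 1]%classic = `[0, 1]%classic); last first.
    apply/seteqP; split => y /=; first by case.
    rewrite !in_itv /= => /andP [h1 h2]; split; apply/andP; split => //; lra.
  by have := restrict _ measurableT; rewrite setTI probability_setT => <-.
Qed.

Lemma Fmu_eq : Feq R B (fun x => m `[0, x]%classic).
Proof.
move=> x; rewrite SSm; last 2 first.
- exact: measurable_itv.
- by move=> d _; rewrite pre_cc; exact: measurable_itv.
congr (_ * _); apply: eq_bigr => d _; rewrite pre_cc; congr fine.
rewrite [LHS]restrict; last exact: measurable_itv.
rewrite [RHS]restrict; last exact: measurable_itv.
congr (mu _); have := ler0n R d => d0.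
apply/seteqP; split => y [] /=; rewrite ?in_itv /= => /andP [h1 h2] /andP [h3 h4];
  (split; rewrite /= ?in_itv /=; apply/andP; split; lra).
Qed.

End Meas.


Theorem lemma2p8 (R : realType) (L M N : nat) (B1 B2 : seq bool)
  (mu1 mu2 : probability R R) :
  binary_digit_vector (N ^ L) B1 ->
  binary_digit_vector (N ^ M) B2 ->
  self_similar B1 mu1 -> self_similar B2 mu2 ->
  kron B1 B2 = kron B2 B1 ->
  cdf_of mu1 = cdf_of mu2.
Proof.
move=> [h1 s1 /andP [c1 _]] [h2 s2 /andP [c2 _]] S1 S2 H.
have K1 : (0 < size B1)%N by rewrite s1; apply: leq_trans h1.
have K2 : (0 < size B2)%N by rewrite s2; apply: leq_trans h2.
have B1bd := Fmu_bd _ _ _ K1 c1 S1.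
have B2bd := Fmu_bd _ _ _ K2 c2 S2.
have E1 := Feq_kpow _ _ _ M (Fmu_eq _ _ _ K1 c1 S1).
have E2 := Feq_kpow _ _ _ L (Fmu_eq _ _ _ K2 c2 S2).
have M0 : M <> 0%N by move=> M0; move: h2; rewrite M0 expn0.
have XY : kpow B1 M = kpow B2 L.
  apply: kron_comm_eq.
  - by rewrite !size_kpow s1 s2 -!expnM mulnC.
  - by rewrite count_kpow expn_gt0 (leq_trans _ c1).
  - by rewrite count_kpow expn_gt0 (leq_trans _ c2).
  - have H1 := kron_comm_pow _ _ L H.
    by have := kron_comm_pow _ _ M (esym H1).
rewrite -XY in E2.
have cX : (2 <= bnorm (kpow B1 M))%N.
  rewrite /bnorm count_kpow -(@prednK M); last by rewrite lt0n; apply/eqP.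
  by rewrite expnS (leq_trans c1) // leq_pmulr // expn_gt0 (leq_trans _ c1).
have U := Funiq _ _ _ _ cX B1bd B2bd E1 E2.
apply: funext => x; rewrite /cdf_of.
rewrite (mE _ mu1); last exact: measurable_itv.
rewrite (mE _ mu2); last exact: measurable_itv.
by rewrite U.
Qed.
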